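(* Let $\mu>1$ and for each $N\ge3$ set $\gamma=\mu\gamma_1^N$. Then $\lim_{N\to\infty}c_N=V(\mu)$, where $V(\mu)=\prod_{k=1}^\infty\frac{\mu k^2-1}{\mu k^2+2}$, and $0<V(\mu)<\infty$.
   Context: $\gamma^N_k=\frac{1}{2\sin^2(k\pi/N)}$ for $k\ge1$; $c_N=\big[1-\frac{3}{2+2\gamma}\big]^{e(N)/2}\prod_{k=1}^{\lfloor (N-1)/2\rfloor}\big[1-\frac{3}{2+\gamma/\gamma^N_k}\big]$, where $e(N)=1$ if $N$ is even and $0$ if $N$ is odd. *)

(* Defs.v *)
From Stdlib Require Import Reals Lra Lia.
Open Scope R_scope.

Fixpoint prod_1_to (f : nat -> R) (n : nat) : R :=
  match n with
  | O => 1
  | S m => prod_1_to f m * f (S m)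
  end.

Definition gammaN (N k : nat) : R :=
  1 / (2 * (sin (INR k * PI / INR N)) ^ 2).

(* c_N (for a given gamma):
   [1 - 3/(2+2 gamma)]^{e(N)/2} * prod_{k=1}^{floor((N-1)/2)} [1 - 3/(2 + gamma/gamma^N_k)],
   e(N) = 1 if N even, 0 if N odd; the power 1/2 is the real square root. *)
Definition cN (gamma : R) (N : nat) : R :=
  (if Nat.even N then sqrt (1 - 3 / (2 + 2 * gamma)) else 1) *
  prod_1_to (fun k => 1 - 3 / (2 + gamma / gammaN N k)) (Nat.div (N - 1) 2).

Definition V_partial (mu : R) (n : nat) : R :=
  prod_1_to (fun k => (mu * INR k ^ 2 - 1) / (mu * INR k ^ 2 + 2)) n.

(* Main.v *)
Require Import Defs.
From Stdlib Require Import Reals Lra Lia.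
Open Scope R_scope.

Lemma prod_split f K j : prod_1_to f (K+j) = prod_1_to f K * prod_1_to (fun i => f (K+i)%nat) j.
Proof. induction j; simpl. rewrite Nat.add_0_r; ring.
  rewrite Nat.add_succ_r; simpl. rewrite IHj; ring. Qed.

Lemma prod_01 f n : (forall k, (1<=k<=n)%nat -> 0 <= f k <= 1) -> 0 <= prod_1_to f n <= 1.
Proof. induction n; simpl; intros H. lra.
  assert (H1 := IHn (fun k hk => H k ltac:(lia))). assert (H2 := H (S n) ltac:(lia)). nra. Qed.

Lemma prod_pos f n : (forall k, (1<=k<=n)%nat -> 0 < f k) -> 0 < prod_1_to f n.
Proof. induction n; simpl; intros H. lra.
  assert (H1 := IHn (fun k hk => H k ltac:(lia))). assert (H2 := H (S n) ltac:(lia)). nra. Qed.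

Lemma inv_sq_le m : 1 <= m -> 1/(m+1)^2 <= 1/m - 1/(m+1).
Proof. intros hm.
  replace (1/m - 1/(m+1)) with (1/(m*(m+1))) by (field; lra).
  apply Rmult_le_compat_l; [lra|]. apply Rinv_le_contravar; nra. Qed.

Lemma tail f K j C : (1<=K)%nat -> 0 <= C ->
  (forall i, (1<=i<=j)%nat -> 0 <= f (K+i)%nat <= 1 /\ 1 - f (K+i)%nat <= C / INR (K+i) ^ 2) ->
  0 <= prod_1_to (fun i => f (K+i)%nat) j <= 1 /\
  1 - C * (1/INR K - 1/INR (K+j)) <= prod_1_to (fun i => f (K+i)%nat) j.
Proof.
  intros hK hC. induction j; intros H; simpl.
  - rewrite Nat.add_0_r. lra.
  - destruct (IHj (fun i hi => H i ltac:(lia))) as [[P0 P1] PL].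
    destruct (H (S j) ltac:(lia)) as [[a0 a1] aC].
    set (P := prod_1_to (fun i => f (K+i)%nat) j) in *.
    set (a := f (K + S j)%nat) in *.
    assert (hm : 1 <= INR (K+j)). { replace 1 with (INR 1) by reflexivity. apply le_INR; lia. }
    rewrite Nat.add_succ_r, S_INR in aC |- *.
    assert (hi := inv_sq_le _ hm).
    assert (C / (INR (K+j) + 1)^2 = C * (1/(INR (K+j) + 1)^2)) by (unfold Rdiv; ring).
    split; [nra|]. nra.
Qed.

Lemma tail_bound f K n C : (1<=K)%nat -> (K<=n)%nat -> 0 <= C ->
  (forall k, (1<=k<=n)%nat -> 0 <= f k <= 1 /\ 1 - f k <= C / INR k ^ 2) ->
  Rabs (prod_1_to f n - prod_1_to f K) <= C / INR K.
Proof.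
  intros hK hn hC H. replace n with (K + (n-K))%nat by lia.
  rewrite prod_split.
  destruct (tail f K (n-K) C hK hC (fun i hi => H (K+i)%nat ltac:(lia))) as [[T0 T1] TL].
  destruct (prod_01 f K (fun k hk => proj1 (H k ltac:(lia)))) as [P0 P1].
  assert (0 <= 1 / INR (K + (n-K))). { unfold Rdiv; rewrite Rmult_1_l; apply Rlt_le, Rinv_0_lt_compat, lt_0_INR; lia. }
  assert (C * (1/INR K) = C / INR K) by (unfold Rdiv; ring).
  apply Rabs_le. nra.
Qed.

Lemma fin_cv (A : nat -> nat -> R) b K : (forall k, (1<=k<=K)%nat -> Un_cv (fun n => A n k) (b k)) ->
  Un_cv (fun n => prod_1_to (A n) K) (prod_1_to b K).
Proof. induction K; intros H; simpl.
  - intros eps he. exists 0%nat. intros. unfold R_dist. rewrite Rminus_diag, Rabs_R0. lra.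
  - apply CV_mult. apply IHK; intros; apply H; lia. apply H; lia. Qed.

Lemma cv_bound u l c d : Un_cv u l -> (exists n0, forall n, (n>=n0)%nat -> Rabs (u n - c) <= d) ->
  Rabs (l - c) <= d.
Proof. intros Hu [n0 Hn]. destruct (Rle_dec (Rabs (l-c)) d) as [h|h]; auto.
  exfalso. destruct (Hu (Rabs (l-c) - d)) as [N HN]; [lra|].
  assert (h1 := HN (max N n0) ltac:(lia)). assert (h2 := Hn (max N n0) ltac:(lia)).
  unfold R_dist in h1. set (x := u (max N n0)) in *.
  assert (Rabs (l - c) <= Rabs (l - x) + Rabs (x - c)).
  { replace (l - c) with ((l-x) + (x-c)) by ring. apply Rabs_triang. }
  rewrite Rabs_minus_sym in h1. lra. Qed.

Lemma main_conv (A : nat -> nat -> R) (b : nat -> R) (M : nat -> nat) (C V : R) :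
  0 < C ->
  (forall n k, (1 <= k <= M n)%nat -> 0 <= A n k <= 1 /\ 1 - A n k <= C / INR k ^ 2) ->
  (forall k, (1 <= k)%nat -> 0 <= b k <= 1 /\ 1 - b k <= C / INR k ^ 2) ->
  (forall K, exists n0, forall n, (n >= n0)%nat -> (K <= M n)%nat) ->
  (forall k, (1 <= k)%nat -> Un_cv (fun n => A n k) (b k)) ->
  Un_cv (prod_1_to b) V ->
  Un_cv (fun n => prod_1_to (A n) (M n)) V.
Proof.
  intros hC HA Hb HM Hcv HV eps he.
  destruct (INR_unbounded (4*C/eps)) as [K0 HK0].
  set (K := S K0).
  assert (hK : INR K > 4*C/eps) by (unfold K; rewrite S_INR; lra).
  assert (hKp : 0 < INR K) by (apply lt_0_INR; unfold K; lia).
  assert (hCK : C / INR K < eps/4).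
  { apply (Rmult_lt_reg_r (INR K * 4 / eps)). apply Rdiv_lt_0_compat; lra.
    replace (C / INR K * (INR K * 4 / eps)) with (4*C/eps) by (field; lra).
    replace (eps / 4 * (INR K * 4 / eps)) with (INR K) by (field; lra). lra. }
  assert (HVb : Rabs (V - prod_1_to b K) <= C / INR K).
  { apply (cv_bound (prod_1_to b)); auto. exists K. intros n hn.
    apply tail_bound; try lia; try lra. intros; apply Hb; lia. }
  destruct (fin_cv A b K (fun k hk => Hcv k ltac:(lia)) (eps/4)) as [n1 Hn1]; [lra|].
  destruct (HM K) as [n2 Hn2].
  exists (max n1 n2). intros n hn.
  assert (h1 := Hn1 n ltac:(lia)). assert (h2 := Hn2 n ltac:(lia)). unfold R_dist in *.
  assert (h3 : Rabs (prod_1_to (A n) (M n) - prod_1_to (A n) K) <= C / INR K).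
  { apply tail_bound; try lia; try lra. intros; apply HA; lia. }
  set (x := prod_1_to (A n) (M n)) in *. set (y := prod_1_to (A n) K) in *.
  set (z := prod_1_to b K) in *.
  assert (Rabs (x - V) <= Rabs (x - y) + Rabs (y - z) + Rabs (z - V)).
  { replace (x - V) with ((x-y) + (y-z) + (z-V)) by ring.
    eapply Rle_trans. apply Rabs_triang. apply Rplus_le_compat_r. apply Rabs_triang. }
  rewrite Rabs_minus_sym in HVb. lra.
Qed.
Lemma div_le a b c d : 0 < b -> 0 < d -> a * d <= c * b -> a / b <= c / d.
Proof. intros hb hd h. unfold Rdiv.
  apply (Rmult_le_reg_r (b*d)). nra.
  replace (a * / b * (b*d)) with (a*d) by (field; lra).
  replace (c * / d * (b*d)) with (c*b) by (field; lra). lra. Qed.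

Lemma core (mu x k s1 sk : R) : 1 < mu -> 0 < x -> x <= 4/3 -> 1 <= k -> k*x <= 2 ->
  x - x^3/6 <= s1 <= x -> k*x - (k*x)^3/6 <= sk <= k*x -> s1 <= sk ->
  let G := mu * (1/(2*s1^2)) / (1/(2*sk^2)) in
  (0 <= 1 - 3/(2+G) <= 1) /\ (1 - (1 - 3/(2+G)) <= 27 / k^2) /\
  Rabs ((1 - 3/(2+G)) - (mu*k^2-1)/(mu*k^2+2)) <= mu*(k^4+k^2)*x^2.
Proof.
  intros hmu hx hx4 hk hkx [s1l s1u] [skl sku] hs G.
  assert (t1 : 2/3 <= 1 - x^2/6) by nra.
  assert (s1p : 2/3*x <= s1) by nra.
  assert (t2 : 1/3 <= 1 - (k*x)^2/6) by nra.
  assert (skp : k*x/3 <= sk) by nra.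
  assert (s1pos : 0 < s1) by nra.
  assert (skpos : 0 < sk) by nra.
  set (r := sk^2/s1^2).
  assert (hG : G = mu * r) by (unfold G, r; field; lra).
  assert (hr1 : 1 <= r) by (unfold r; replace 1 with (1/1) by field; apply div_le; nra).
  assert (hr9 : k^2/9 <= r).
  { unfold r; apply div_le; try nra.
    assert (0 <= k*s1 <= 3*sk) by nra.
    assert ((k*s1)^2 <= (3*sk)^2) by (apply pow_incr; lra). nra. }
  rewrite hG.
  assert (hz : 1 <= mu * r) by nra.
  split; [|split].
  - assert (0 < 3/(2+mu*r) <= 1). { split. apply Rdiv_lt_0_compat; lra.
      replace 1 with (3/3) by field. apply div_le; lra. } lra.
  - replace (1 - (1 - 3/(2+mu*r))) with (3/(2+mu*r)) by ring.
    apply div_le; nra.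
  -
    assert (hrk : Rabs (r - k^2) <= (k^4+k^2)*x^2).
    { replace (r - k^2) with ((sk^2 - k^2*s1^2)/s1^2) by (unfold r; field; lra).
      unfold Rdiv; rewrite Rabs_mult, Rabs_inv, (Rabs_pos_eq (s1^2)) by nra.
      apply (Rmult_le_reg_r (s1^2)). nra.
      rewrite Rmult_assoc, Rinv_l, Rmult_1_r by nra.
      assert (u1 : sk^2 - k^2*s1^2 <= k^2*x^4/3).
      { assert ((x - x^3/6)^2 <= s1^2) by (apply pow_incr; nra).
        assert (k^2*(x - x^3/6)^2 <= k^2*s1^2) by (apply Rmult_le_compat_l; nra).
        assert (sk^2 <= (k*x)^2) by (apply pow_incr; nra).
        assert (k^2*x^2*(x^2/3) - k^2*x^2*(x^4/36) <= k^2*x^4/3).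
        { assert (0 <= k^2*x^2*(x^4/36)) by (apply Rmult_le_pos; nra). nra. }
        nra. }
      assert (u2 : -(k^4*x^4/3) <= sk^2 - k^2*s1^2).
      { assert (k^2*s1^2 <= k^2*x^2) by (apply Rmult_le_compat_l; nra).
        assert ((k*x - (k*x)^3/6)^2 <= sk^2) by (apply pow_incr; nra).
        assert (0 <= (k*x)^6/36) by (apply Rmult_le_pos; [apply pow_le|]; nra). nra. }
      assert (4*x^2/9 <= s1^2) by (replace (4*x^2/9) with ((2/3*x)^2) by field; apply pow_incr; nra).
      assert ((k^4+k^2)*x^2*(4*x^2/9) <= (k^4+k^2)*x^2*s1^2) by (apply Rmult_le_compat_l; [apply Rmult_le_pos; nra|lra]).
      assert (0 <= k^2*x^4) by (apply Rmult_le_pos; nra).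
      assert (0 <= k^4*x^4) by (apply Rmult_le_pos; nra).
      apply Rabs_le. split; nra. }
    assert (0 <= mu*k^2) by (apply Rmult_le_pos; nra).
    replace ((1 - 3/(2+mu*r)) - (mu*k^2-1)/(mu*k^2+2)) with (3*mu*(r-k^2)/((2+mu*r)*(mu*k^2+2)))
      by (field; nra).
    unfold Rdiv. rewrite !Rabs_mult, Rabs_inv, (Rabs_pos_eq 3), (Rabs_pos_eq mu), (Rabs_pos_eq ((2+mu*r)*(mu*k^2+2))) by nra.
    assert (hd : 4 <= (2+mu*r)*(mu*k^2+2)) by nra.
    assert (/((2+mu*r)*(mu*k^2+2)) <= /4) by (apply Rinv_le_contravar; lra).
    assert (0 <= Rabs (r-k^2)) by apply Rabs_pos.
    assert (0 < /((2+mu*r)*(mu*k^2+2))) by (apply Rinv_0_lt_compat; lra).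
    set (a := Rabs (r-k^2)) in *. set (i := /((2+mu*r)*(mu*k^2+2))) in *.
    assert (a*i <= a/4) by (unfold Rdiv; apply Rmult_le_compat_l; lra).
    assert (mu * a <= mu * ((k^4+k^2)*x^2)) by (apply Rmult_le_compat_l; lra).
    assert (0 <= mu*a) by (apply Rmult_le_pos; lra).
    assert (3*mu*(a*i) <= 3*mu*(a/4)) by (apply Rmult_le_compat_l; lra).
    replace (3*mu*a*i) with (3*mu*(a*i)) by ring. nra.
Qed.

Lemma sin_lb3 a : 0 <= a -> a <= PI -> a - a^3/6 <= sin a.
Proof. intros h1 h2. destruct (sin_bound a 0 h1 h2) as [H _].
  unfold sin_approx, sin_term in H; simpl in H. lra. Qed.

Lemma cv_of_bound (u : nat -> R) l D : 0 <= D ->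
  (exists n0, forall n, (n >= n0)%nat -> Rabs (u n - l) <= D / INR (n+1)) -> Un_cv u l.
Proof.
  intros hD [n0 Hn] eps he. destruct (INR_unbounded (D/eps)) as [m Hm].
  exists (max n0 m). intros n hn. unfold R_dist.
  assert (h1 := Hn n ltac:(lia)).
  assert (hn1 : INR m + 1 <= INR (n+1)) by (rewrite <- S_INR; apply le_INR; lia).
  assert (hp : 0 < INR (n+1)) by (apply lt_0_INR; lia).
  assert (D / INR (n+1) < eps).
  { apply (Rmult_lt_reg_r (INR (n+1))); auto.
    replace (D / INR (n+1) * INR (n+1)) with D by (field; lra).
    assert (D < eps * (INR m + 1)).
    { apply (Rmult_lt_reg_r (/eps)). apply Rinv_0_lt_compat; lra.
      replace (eps * (INR m + 1) * /eps) with (INR m + 1) by (field; lra).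
      unfold Rdiv in Hm. lra. }
    nra. }
  lra.
Qed.

Lemma cv_ge u l c : Un_cv u l -> (exists n0, forall n, (n >= n0)%nat -> c <= u n) -> c <= l.
Proof. intros Hu [n0 Hn]. destruct (Rle_dec c l) as [h|h]; auto. exfalso.
  destruct (Hu (c - l)) as [N HN]; [lra|].
  assert (h1 := HN (max N n0) ltac:(lia)). assert (h2 := Hn (max N n0) ltac:(lia)).
  unfold R_dist in h1. apply Rabs_def2 in h1. lra. Qed.


Definition Aseq (mu : R) (n k : nat) : R := 1 - 3 / (2 + mu * gammaN (n+3) 1 / gammaN (n+3) k).
Definition bseq (mu : R) (k : nat) : R := (mu * INR k ^ 2 - 1) / (mu * INR k ^ 2 + 2).
Definition Mseq (n : nat) : nat := Nat.div (n + 3 - 1) 2.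

Lemma A_facts mu n k : 1 < mu -> (1 <= k)%nat -> (2*k <= n+2)%nat ->
  (0 <= Aseq mu n k <= 1) /\ (1 - Aseq mu n k <= 27 / INR k ^ 2) /\
  Rabs (Aseq mu n k - bseq mu k) <= mu * (INR k^4 + INR k^2) * 16 / INR (n+1).
Proof.
  intros hmu hk hkn.
  set (x := PI / INR (n+3)).
  assert (hN : 3 <= INR (n+3)) by (replace 3 with (INR 3) by (simpl; ring); apply le_INR; lia).
  assert (hPI := PI_RGT_0). assert (hPI4 := PI_4).
  assert (hx : 0 < x) by (unfold x; apply Rdiv_lt_0_compat; lra).
  assert (hxP : x * INR (n+3) = PI) by (unfold x; field; lra).
  assert (hx4 : x <= 4/3) by (assert (x*3 <= x*INR (n+3)) by (apply Rmult_le_compat_l; lra); lra).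
  assert (hk1 : 1 <= INR k) by (replace 1 with (INR 1) by reflexivity; apply le_INR; lia).
  assert (h2k : 2 * INR k <= INR (n+3)).
  { replace 2 with (INR 2) by (simpl; ring). rewrite <- mult_INR. apply le_INR; lia. }
  assert (hkx : INR k * x <= PI/2) by nra.
  assert (hxk : x <= INR k * x) by nra.
  assert (s1l := sin_lb3 x ltac:(lra) ltac:(lra)).
  assert (s1u := sin_lt_x x hx).
  assert (skl := sin_lb3 (INR k * x) ltac:(nra) ltac:(lra)).
  assert (sku := sin_lt_x (INR k * x) ltac:(nra)).
  assert (hs : sin x <= sin (INR k * x)) by (apply sin_incr_1; lra).
  assert (C := core mu x (INR k) (sin x) (sin (INR k * x)) hmu hx hx4 hk1 ltac:(lra)
     ltac:(lra) ltac:(lra) hs).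
  simpl in C.
  assert (hA : Aseq mu n k = 1 - 3 / (2 + mu * (1 / (2 * sin x ^ 2)) / (1 / (2 * sin (INR k * x) ^ 2)))).
  { unfold Aseq, gammaN.
    replace (INR k * PI / INR (n+3)) with (INR k * x) by (unfold x, Rdiv; ring).
    replace (INR 1 * PI / INR (n+3)) with x by (unfold x; simpl; unfold Rdiv; ring). reflexivity. }
  rewrite hA. unfold bseq. destruct C as [C1 [C2 C3]].
  split; [exact C1|split; [exact C2|]].
  eapply Rle_trans; [exact C3|].
  assert (0 <= mu * (INR k^4 + INR k^2)) by (apply Rmult_le_pos; nra).
  assert (hx2 : x^2 <= 16 / INR (n+1)).
  { assert (hp : 0 < INR (n+1)) by (apply lt_0_INR; lia).
    assert (INR (n+1) <= INR (n+3)) by (apply le_INR; lia).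
    apply (Rmult_le_reg_r (INR (n+1))); auto.
    replace (16 / INR (n+1) * INR (n+1)) with 16 by (field; lra).
    assert (x^2 * INR (n+1) <= x * x * (INR (n+3) * INR (n+3))) by nra.
    replace (x * x * (INR (n+3) * INR (n+3))) with (PI * PI) in H1 by (rewrite <- hxP; ring).
    nra. }
  replace (mu * (INR k ^ 4 + INR k ^ 2) * 16 / INR (n + 1)) with
    (mu * (INR k ^ 4 + INR k ^ 2) * (16 / INR (n + 1))) by (unfold Rdiv; ring).
  apply Rmult_le_compat_l; auto.
Qed.

Lemma b_facts mu k : 1 < mu -> (1 <= k)%nat ->
  (0 <= bseq mu k <= 1) /\ (1 - bseq mu k <= 27 / INR k ^ 2) /\ 0 < bseq mu k.
Proof.
  intros hmu hk. unfold bseq.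
  assert (hk1 : 1 <= INR k) by (replace 1 with (INR 1) by reflexivity; apply le_INR; lia).
  assert (INR k ^ 2 >= 1) by nra.
  assert (h : 1 < mu * INR k ^ 2) by nra.
  assert (0 < (mu * INR k ^ 2 - 1) / (mu * INR k ^ 2 + 2)) by (apply Rdiv_lt_0_compat; lra).
  assert ((mu * INR k ^ 2 - 1) / (mu * INR k ^ 2 + 2) <= 1).
  { replace ((mu * INR k ^ 2 - 1) / (mu * INR k ^ 2 + 2)) with (1 - 3 / (mu * INR k ^ 2 + 2)) by (field; lra).
    assert (0 < 3 / (mu * INR k ^ 2 + 2)) by (apply Rdiv_lt_0_compat; lra). lra. }
  split; [lra|split; [|lra]].
  replace (1 - (mu * INR k ^ 2 - 1) / (mu * INR k ^ 2 + 2)) with (3 / (mu * INR k ^ 2 + 2)) by (field; lra).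
  apply div_le; nra.
Qed.

Lemma E_facts mu n : 1 < mu ->
  Rabs ((if Nat.even (n+3) then sqrt (1 - 3 / (2 + 2 * (mu * gammaN (n+3) 1))) else 1) - 1)
   <= 48 / INR (n+1).
Proof.
  intros hmu.
  assert (hp : 0 < INR (n+1)) by (apply lt_0_INR; lia).
  assert (h48 : 0 <= 48 / INR (n+1)) by (apply Rlt_le, Rdiv_lt_0_compat; lra).
  destruct (Nat.even (n+3)); [|rewrite Rminus_diag, Rabs_R0; lra].
  set (x := PI / INR (n+3)).
  assert (hN : 3 <= INR (n+3)) by (replace 3 with (INR 3) by (simpl; ring); apply le_INR; lia).
  assert (hPI := PI_RGT_0). assert (hPI4 := PI_4).
  assert (hx : 0 < x) by (unfold x; apply Rdiv_lt_0_compat; lra).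
  assert (hxP : x * INR (n+3) = PI) by (unfold x; field; lra).
  assert (hx4 : x <= 4/3) by (assert (x*3 <= x*INR (n+3)) by (apply Rmult_le_compat_l; lra); lra).
  assert (hxPI : x <= PI) by (assert (x*1 <= x*INR (n+3)) by (apply Rmult_le_compat_l; lra); lra).
  assert (s1l := sin_lb3 x ltac:(lra) ltac:(lra)).
  assert (s1u := sin_lt_x x hx).
  assert (s1p : 0 < sin x) by nra.
  assert (hs1 := SIN_bound x).
  assert (hg : gammaN (n+3) 1 = 1 / (2 * sin x ^ 2)).
  { unfold gammaN. replace (INR 1 * PI / INR (n+3)) with x by (unfold x; simpl; unfold Rdiv; ring). reflexivity. }
  rewrite hg.
  set (s := sin x) in *.
  set (w := 1 - 3 / (2 + 2 * (mu * (1 / (2 * s ^ 2))))).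
  assert (hw : 1 - w = 3 * s^2 / (2 * s^2 + mu)) by (unfold w; field; nra).
  assert (hw1 : 0 <= w <= 1).
  { assert (0 < 3 * s^2 / (2 * s^2 + mu)) by (apply Rdiv_lt_0_compat; nra).
    assert (3 * s^2 / (2 * s^2 + mu) <= 1/1) by (apply div_le; nra).
    lra. }
  assert (hw2 : 1 - w <= 3 * x^2).
  { rewrite hw. replace (3 * x^2) with (3*x^2/1) by field. assert (s^2 <= x^2) by (apply pow_incr; lra).
    apply div_le; nra. }
  assert (hq1 : sqrt w <= 1) by (rewrite <- sqrt_1; apply sqrt_le_1_alt; lra).
  assert (hq0 : 0 <= sqrt w) by apply sqrt_pos.
  assert (hq := sqrt_sqrt w ltac:(lra)).
  assert (hqw : w <= sqrt w) by nra.
  assert (hx2 : 3 * x^2 <= 48 / INR (n+1)).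
  { assert (INR (n+1) <= INR (n+3)) by (apply le_INR; lia).
    apply (Rmult_le_reg_r (INR (n+1))); auto.
    replace (48 / INR (n+1) * INR (n+1)) with 48 by (field; lra).
    assert (x^2 * INR (n+1) <= x * x * (INR (n+3) * INR (n+3))) by nra.
    replace (x * x * (INR (n+3) * INR (n+3))) with (PI * PI) in H0 by (rewrite <- hxP; ring).
    nra. }
  apply Rabs_le. lra.
Qed.

Theorem proposition3p2 (mu : R) (hmu : 1 < mu) :
  exists V : R,
    Un_cv (V_partial mu) V /\
    0 < V /\
    Un_cv (fun n : nat => cN (mu * gammaN (n + 3) 1) (n + 3)) V.
Proof.
  assert (Hb := fun k hk => b_facts mu k hmu hk).
  assert (HVp : forall n, V_partial mu n = prod_1_to (bseq mu) n) by reflexivity.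
  assert (Hdec : Un_decreasing (V_partial mu)).
  { intro n. rewrite !HVp. simpl.
    destruct (prod_01 (bseq mu) n (fun k hk => proj1 (Hb k ltac:(lia)))).
    destruct (Hb (S n) ltac:(lia)) as [[? ?] _]. nra. }
  assert (Hlb : has_lb (V_partial mu)).
  { exists 0. intros y [i ->]. unfold opp_seq. rewrite HVp.
    destruct (prod_01 (bseq mu) i (fun k hk => proj1 (Hb k ltac:(lia)))). lra. }
  destruct (decreasing_cv _ Hdec Hlb) as [V HV].
  exists V. split; [exact HV|split].
  - assert (hp28 : 0 < prod_1_to (bseq mu) 28) by (apply prod_pos; intros; apply Hb; lia).
    apply Rlt_le_trans with (prod_1_to (bseq mu) 28 / 28).
    { apply Rdiv_lt_0_compat; lra. }
    apply (cv_ge _ _ _ HV). exists 28%nat. intros n hn. rewrite HVp.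
    replace n with (28 + (n-28))%nat by lia. rewrite prod_split.
    destruct (tail (bseq mu) 28 (n-28) 27 ltac:(lia) ltac:(lra)
      (fun i hi => let h := Hb (28+i)%nat ltac:(lia) in conj (proj1 h) (proj1 (proj2 h)))) as [[T0 T1] TL].
    assert (0 <= 1 / INR (28 + (n-28))). { unfold Rdiv; rewrite Rmult_1_l; apply Rlt_le, Rinv_0_lt_compat, lt_0_INR; lia. }
    assert (h28 : INR 28 = 28) by (simpl; ring). rewrite h28 in TL. nra.
  - assert (HP : Un_cv (fun n => prod_1_to (Aseq mu n) (Mseq n)) V).
    { apply (main_conv (Aseq mu) (bseq mu) Mseq 27 V); try lra.
      - intros n k hk. unfold Mseq in hk.
        replace (n+3-1)%nat with (n+2)%nat in hk by lia.
        assert (2 * ((n+2)/2) <= n+2)%nat by (apply Nat.Div0.mul_div_le).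
        destruct (A_facts mu n k hmu ltac:(lia) ltac:(lia)) as [h1 [h2 _]]. auto.
      - intros k hk. destruct (Hb k hk) as [h1 [h2 _]]. auto.
      - intros K. exists (2*K)%nat. intros n hn. unfold Mseq.
        replace (n+3-1)%nat with (n+2)%nat by lia.
        replace K with ((2*K)/2)%nat at 1 by (rewrite Nat.mul_comm, Nat.div_mul; lia).
        apply Nat.Div0.div_le_mono; lia.
      - intros k hk. apply (cv_of_bound _ _ (mu * (INR k^4 + INR k^2) * 16)).
        + assert (1 <= INR k) by (replace 1 with (INR 1) by reflexivity; apply le_INR; lia).
          apply Rmult_le_pos; [apply Rmult_le_pos|]; nra.
        + exists (2*k)%nat. intros n hn.
          destruct (A_facts mu n k hmu hk ltac:(lia)) as [_ [_ h3]]. exact h3.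
      - exact HV. }
    assert (HE : Un_cv (fun n => if Nat.even (n+3) then sqrt (1 - 3 / (2 + 2 * (mu * gammaN (n+3) 1))) else 1) 1).
    { apply (cv_of_bound _ _ 48); [lra|]. exists 0%nat. intros n _. apply E_facts; auto. }
    assert (H := CV_mult _ _ _ _ HE HP). rewrite Rmult_1_l in H. exact H.
Qed.
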